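(* Let $G$ be a connected graph. Then $\{\bar{x},\overline{xy}\}\,\Theta^\ast_{S(G)}\,\{\overline{xy},\bar{y}\}$ holds for every edge $\{x,y\}$ of $G$ if and only if $\Theta^\ast_{S(G)}=S(\Theta^\ast_G)$.
   Context: For a connected graph $H$ with shortest-path distance $d_H$, two edges $\{x,y\}$ and $\{u,v\}$ of $H$ are in relation $\Theta_H$ if $d_H(x,u)+d_H(y,v)\neq d_H(x,v)+d_H(y,u)$; $\Theta^\ast_H$ is the transitive closure of $\Theta_H$. The full subdivision $S(G)$ is obtained by subdividing every edge of $G$ exactly once; the vertex of $S(G)$ corresponding to $x\in V(G)$ is $\bar{x}$ and the vertex subdividing $\{x,y\}\in E(G)$ is $\overline{xy}$. $S(\Theta^\ast_G)$ denotes the relation on $E(S(G))$ in which $\{\bar{x},\overline{xy}\}$ and $\{\bar{u},\overline{uv}\}$ are related if and only if $\{x,y\}\,\Theta^\ast_G\,\{u,v\}$ (in particular $\{\bar{x},\overline{xy}\}$ and $\{\overline{xy},\bar{y}\}$ are always related). *)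

(* Defs.v *)
From mathcomp Require Import all_boot.
Set Implicit Arguments. Unset Strict Implicit. Unset Printing Implicit Defensive.

Section Graphs.
Variable T : finType.
Variable e : rel T.

Definition simple_graph : Prop := symmetric e /\ irreflexive e.
Definition connected_graph : Prop := forall x y : T, connect e x y.

Definition walk_n (n : nat) (x y : T) : bool :=
  [exists p : n.-tuple T, path e x p && (last x p == y)].

(* shortest-path distance: the least n (< #|T|) such that a walk of length n
   from x to y exists; this is the usual distance when the graph is connected *)
Definition gdist (x y : T) : nat := find (fun n => walk_n n x y) (iota 0 #|T|).

(* edges of H are represented as ordered pairs (x,y) with e x y;
   Theta does not depend on the orientations *)
Definition Theta (a b : T * T) : bool :=
  [&& e a.1 a.2, e b.1 b.2 &
      gdist a.1 b.1 + gdist a.2 b.2 != gdist a.1 b.2 + gdist a.2 b.1].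

(* transitive closure of Theta (on edges; Theta is reflexive on edges) *)
Definition ThetaStar (a b : T * T) : bool := connect Theta a b.

Definition is_edge_set (s : {set T}) : bool :=
  [exists x, exists y, e x y && (s == [set x; y])].
Definition Eset := {s : {set T} | is_edge_set s}.
Definition SV : finType := (T + Eset)%type.

(* inl x is \bar x, inr s (s = {x,y}) is \overline{xy} *)
Definition sadj (a b : SV) : bool :=
  match a, b with
  | inl x, inr s => x \in val s
  | inr s, inl x => x \in val s
  | _, _ => false
  end.

Definition sub_edge (f : SV * SV) : option Eset :=
  match f with
  | (inl _, inr s) => Some s
  | (inr s, inl _) => Some s
  | _ => None
  end.

Definition SThetaStar (f1 f2 : SV * SV) : Prop :=
  match sub_edge f1, sub_edge f2 with
  | Some s1, Some s2 => exists x y u v : T,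
      val s1 = [set x; y] /\ val s2 = [set u; v] /\ ThetaStar (x, y) (u, v)
  | _, _ => False
  end.

End Graphs.

(* Main.v *)
Require Import Defs.
From mathcomp Require Import all_boot zify.
Set Implicit Arguments. Unset Strict Implicit. Unset Printing Implicit Defensive.

Section Gen.
Variables (V : finType) (r : rel V).

Lemma walkP n x y : reflect (exists p : seq V, [/\ size p = n, path r x p & last x p = y]) (walk_n r n x y).
Proof.
apply: (iffP existsP) => [[p /andP[hp /eqP hl]]|[p [hs hp hl]]].
  by exists (val p); rewrite size_tuple.
have hs' : size p == n by rewrite hs.
by exists (Tuple hs'); rewrite /= hp hl eqxx.
Qed.

Lemma walk0 x y : walk_n r 0 x y = (x == y).
Proof.
apply/walkP/eqP => [[p [/size0nil -> _ <-]]|<-] //.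
by exists [::].
Qed.

Lemma walk_rcons n x y z : walk_n r n x y -> r y z -> walk_n r n.+1 x z.
Proof.
move=> /walkP[p [hs hp hl]] hyz; apply/walkP; exists (rcons p z); split.
- by rewrite size_rcons hs.
- by rewrite rcons_path hp hl hyz.
- by rewrite last_rcons.
Qed.

Lemma walk_cons n x y z : r x y -> walk_n r n y z -> walk_n r n.+1 x z.
Proof.
move=> hxy /walkP[p [hs hp hl]]; apply/walkP; exists (y :: p); split => //=.
- by rewrite hs.
- by rewrite hxy hp.
Qed.

Lemma walk_last n x z : walk_n r n.+1 x z -> exists y, walk_n r n x y /\ r y z.
Proof.
move/walkP=> [p [hs hp hl]]; case/lastP: p hs hp hl => [//|p w].
rewrite size_rcons rcons_path last_rcons => [[hs]] /andP[hp hw] hl.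
exists (last x p); split; last by rewrite -hl.
by apply/walkP; exists p.
Qed.

Lemma walk_connect n x y : walk_n r n x y -> connect r x y.
Proof. by move/walkP=> [p [_ hp hl]]; apply/connectP; exists p. Qed.

Lemma gdist_walk x y : connect r x y ->
  walk_n r (gdist r x y) x y /\ (forall n, walk_n r n x y -> gdist r x y <= n).
Proof.
move/connectP=> [p hp ->]; case/shortenP: hp => p' hp' hu _.
set y0 := last x p'.
have hw : walk_n r (size p') x y0 by apply/walkP; exists p'.
have hsz : size p' < #|V|.
  by have := max_card (mem (x :: p')); rewrite (card_uniqP hu).
have hhas : has (fun n => walk_n r n x y0) (iota 0 #|V|).
  by apply/hasP; exists (size p'); rewrite // mem_iota.
have hf : gdist r x y0 < #|V|.
  by rewrite /gdist -[X in _ < X](size_iota 0) -has_find.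
split.
- by have := nth_find 0 hhas; rewrite nth_iota ?add0n //.
- move=> n hn; case: (leqP #|V| n) => hVn.
    exact: ltnW (leq_trans hf hVn).
  rewrite leqNgt; apply/negP => hlt.
  by have := before_find 0 hlt; rewrite nth_iota ?add0n // hn.
Qed.

Lemma lip_le (phi : V -> nat) a : phi a = 0 ->
  (forall u w, r u w -> phi w <= phi u + 1) ->
  forall n v, walk_n r n a v -> phi v <= n.
Proof.
move=> h0 hl; elim => [|n IH] v.
  by rewrite walk0 => /eqP <-; rewrite h0.
move/walk_last => [y [hw hy]].
have := hl _ _ hy; have := IH _ hw; lia.
Qed.

Lemma pred_walk (psi : V -> nat) a : psi a = 0 ->
  (forall v, v != a -> exists u, r u v /\ psi u + 1 = psi v) ->
  forall v, walk_n r (psi v) a v.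
Proof.
move=> h0 hp v; move hk: (psi v) => k.
elim: k v hk => [|k IH] v hk.
  case: (eqVneq v a) => [->|hva]; first by rewrite walk0.
  by have [u [_ hu]] := hp v hva; rewrite hk addn1 in hu.
case: (eqVneq v a) => [hva|hva]; first by rewrite hva h0 in hk.
have [u [hu hpu]] := hp v hva.
apply: (walk_rcons _ hu); apply: IH; lia.
Qed.

Lemma gdist_char (psi : V -> nat) a : psi a = 0 ->
  (forall u w, r u w -> psi w <= psi u + 1) ->
  (forall v, v != a -> exists u, r u v /\ psi u + 1 = psi v) ->
  forall v, gdist r a v = psi v /\ connect r a v.
Proof.
move=> h0 hl hp v.
have hw := pred_walk h0 hp v.
have hc := walk_connect hw.
have [hw' hle] := gdist_walk hc.
split => //; apply/eqP; rewrite eqn_leq hle //=.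
exact: (lip_le h0 hl hw').
Qed.

Section Conn.
Hypothesis conn : forall x y, connect r x y.

Lemma gdist_le n x y : walk_n r n x y -> gdist r x y <= n.
Proof. by have [_ h] := gdist_walk (conn x y); apply: h. Qed.

Lemma gdist_w x y : walk_n r (gdist r x y) x y.
Proof. by have [h _] := gdist_walk (conn x y). Qed.

Lemma gdist_xx x : gdist r x x = 0.
Proof. by apply/eqP; rewrite -leqn0; apply: gdist_le; rewrite walk0. Qed.

Lemma gdist0 x y : gdist r x y = 0 -> x = y.
Proof. by move=> h; have := gdist_w x y; rewrite h walk0 => /eqP. Qed.

Lemma lip2 x y z : r y z -> gdist r x z <= gdist r x y + 1.
Proof. by move=> h; rewrite addn1; apply: gdist_le; apply: walk_rcons h; apply: gdist_w. Qed.

Lemma lip1 x w y : r x w -> gdist r x y <= gdist r w y + 1.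
Proof. by move=> h; rewrite addn1; apply: gdist_le; apply: walk_cons h _; apply: gdist_w. Qed.

Lemma gpred x z : 0 < gdist r x z -> exists w, r w z /\ gdist r x w + 1 = gdist r x z.
Proof.
move=> hp; have := gdist_w x z; case E: (gdist r x z) hp => [//|n] _.
move/walk_last => [w [hw hwz]]; exists w; split => //.
have := gdist_le hw; have := lip2 x hwz; lia.
Qed.

Hypothesis rsym : symmetric r.

Lemma gdist_sym x y : gdist r x y = gdist r y x.
Proof.
have H : forall x y, gdist r y x <= gdist r x y.
  move=> a b; apply: (lip_le (phi := fun v => gdist r v a)) (gdist_w a b).
    exact: gdist_xx.
  by move=> u w huw; apply: lip1; rewrite rsym.
by apply/eqP; rewrite eqn_leq !H.
Qed.
End Conn.
End Gen.

Section S.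
Variables (T : finType) (e : rel T).
Hypotheses (esym : symmetric e) (eirr : irreflexive e) (conn : forall x y : T, connect e x y).

Local Notation D := (gdist e).
Local Notation ES := (@Eset T e).
Local Notation SVt := (@SV T e).
Local Notation sa := (@sadj T e).

Lemma set2_eq (p q x y : T) : [set p; q] = [set x; y] -> (p = x /\ q = y) \/ (p = y /\ q = x).
Proof.
move=> E.
have hp : p \in [set x; y] by rewrite -E set21.
have hq : q \in [set x; y] by rewrite -E set22.
have hx : x \in [set p; q] by rewrite E set21.
have hy : y \in [set p; q] by rewrite E set22.
move: hp hq hx hy; rewrite !inE.
by move=> /orP[] /eqP ? /orP[] /eqP ? /orP[] /eqP ? /orP[] /eqP ?; subst; auto.
Qed.

Lemma ends_ex (s : ES) : exists xy : T * T, e xy.1 xy.2 && (val s == [set xy.1; xy.2]).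
Proof. by case: s => s /= /existsP[x /existsP[y hxy]]; exists (x, y). Qed.

Definition ends (s : ES) := xchoose (ends_ex s).

Lemma endsP s : e (ends s).1 (ends s).2 /\ val s = [set (ends s).1; (ends s).2].
Proof. by have /andP[h /eqP] := xchooseP (ends_ex s). Qed.

Lemma is_edge_of x y : e x y -> is_edge_set e [set x; y].
Proof. by move=> h; apply/existsP; exists x; apply/existsP; exists y; rewrite h eqxx. Qed.

Definition mkE x y (h : e x y) : ES := exist _ [set x; y] (is_edge_of h).

Definition F (a v : SVt) : nat :=
  match a, v with
  | inl x, inl y => 2 * D x y
  | inl x, inr t => 1 + 2 * minn (D x (ends t).1) (D x (ends t).2)
  | inr s, inl y => 1 + 2 * minn (D (ends s).1 y) (D (ends s).2 y)
  | inr s, inr t => if s == t then 0 else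
      2 + 2 * minn (minn (D (ends s).1 (ends t).1) (D (ends s).1 (ends t).2))
                   (minn (D (ends s).2 (ends t).1) (D (ends s).2 (ends t).2))
  end.

Lemma Dxx x : D x x = 0. Proof. exact: gdist_xx. Qed.
Lemma L2 x y z : e y z -> D x z <= D x y + 1. Proof. exact: lip2. Qed.

Lemma F_lip (a : SVt) (z : T) (s : ES) : z \in val s ->
  F a (inr s) <= F a (inl z) + 1 /\ F a (inl z) <= F a (inr s) + 1.
Proof.
case: a => [x|t] /=.
  case: (endsP s); case: (ends s) => p q /= hpq -> .
  rewrite !inE => /orP[] /eqP ->.
    have := L2 x hpq; have := L2 x (hpq : e p q); rewrite esym in hpq.
    have := L2 x hpq; lia.
  have := L2 x hpq; rewrite esym in hpq; have := L2 x hpq; lia.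
case: (eqVneq t s) => [->|hts].
  case: (endsP s); case: (ends s) => p q /= hpq ->.
  by rewrite !inE => /orP[] /eqP ->; rewrite !Dxx; lia.
case: (endsP s); case: (ends s) => p q /= hpq -> .
case: (ends t) => a1 a2 /=.
have hqp : e q p by rewrite esym.
have := L2 a1 hpq; have := L2 a1 hqp; have := L2 a2 hpq; have := L2 a2 hqp.
rewrite !inE => h1 h2 h3 h4 /orP[] /eqP ->; lia.
Qed.

Lemma Flip (a u w : SVt) : sa u w -> F a w <= F a u + 1.
Proof.
case: u => [z|s]; case: w => [z'|s'] //= h.
  by case: (F_lip a h).
by case: (F_lip a h).
Qed.

Lemma endsE (s : ES) x y : val s = [set x; y] -> ends s = (x, y) \/ ends s = (y, x).
Proof.
case: (endsP s) => _; case: (ends s) => p q /= -> /set2_eq [[-> ->]|[-> ->]]; auto.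
Qed.

Lemma F_aa (a : SVt) : F a a = 0.
Proof. by case: a => [x|t] /=; rewrite ?Dxx ?eqxx. Qed.

Lemma D0 x y : D x y = 0 -> x = y. Proof. exact: gdist0. Qed.

Lemma F_pred (a v : SVt) : v != a -> exists u, sa u v /\ F a u + 1 = F a v.
Proof.
case: v => [z|s]; case: a => [x|t] hne.
- have hxz : 0 < D x z.
    rewrite lt0n; apply/eqP => /D0 E; by rewrite E eqxx in hne.
  have [w [hwz hw]] := gpred conn hxz.
  exists (inr (mkE hwz)); split; first by rewrite /= set22.
  rewrite /=.
  have := L2 x hwz.
  by case: (@endsE (mkE hwz) w z erefl) => -> /=; lia.
- case: (endsP t); case Et: (ends t) => [a1 a2] /= ha hv.
  case: (posnP (D a1 z)) => [/D0 E1|h1].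
    exists (inr t); split; first by rewrite /= hv -E1 set21.
    rewrite /= eqxx Et /= -E1 Dxx; lia.
  case: (posnP (D a2 z)) => [/D0 E2|h2].
    exists (inr t); split; first by rewrite /= hv -E2 set22.
    rewrite /= eqxx Et /= -E2 Dxx; lia.
  case: (leqP (D a1 z) (D a2 z)) => hle.
    have [w [hwz hw]] := gpred conn h1.
    exists (inr (mkE hwz)); split; first by rewrite /= set22.
    rewrite /=; case: (eqVneq t (mkE hwz)) => [E|hne'].
      have : z \in val t by rewrite E set22.
      have : z \in [set a1; a2] by rewrite -hv E /= set22.
      by rewrite !inE => /orP[] /eqP E'; subst; have := Dxx a1; have := Dxx a2; lia.
    have := L2 a1 hwz; have := L2 a2 hwz; rewrite Et /=.
    by case: (@endsE (mkE hwz) w z erefl) => -> /=; lia.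
  have [w [hwz hw]] := gpred conn h2.
  exists (inr (mkE hwz)); split; first by rewrite /= set22.
  rewrite /=; case: (eqVneq t (mkE hwz)) => [E|hne'].
    have : z \in [set a1; a2] by rewrite -hv E /= set22.
    by rewrite !inE => /orP[] /eqP E'; subst; have := Dxx a1; have := Dxx a2; lia.
  have := L2 a1 hwz; have := L2 a2 hwz; rewrite Et /=.
  by case: (@endsE (mkE hwz) w z erefl) => -> /=; lia.
- case: (endsP s); case E: (ends s) => [p q] /= hpq hv.
  case: (leqP (D x p) (D x q)) => hle.
    exists (inl p); split; first by rewrite /= hv set21.
    rewrite /= E /=; lia.
  exists (inl q); split; first by rewrite /= hv set22.
  rewrite /= E /=; lia.
- have hst : s != t by apply: contraNneq hne => ->.
  rewrite /= eq_sym (negbTE hst).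
  case: (endsP s); case E: (ends s) => [p q] /= hpq hv.
  case Et: (ends t) => [a1 a2] /=.
  case: (leqP (minn (D a1 p) (D a2 p)) (minn (D a1 q) (D a2 q))) => hle.
    exists (inl p); split; first by rewrite /= hv set21.
    rewrite /=; lia.
  exists (inl q); split; first by rewrite /= hv set22.
  rewrite /=; lia.
Qed.

Lemma sadj_sym : symmetric sa.
Proof. by case=> [x|s] [y|t]. Qed.

Lemma DS_F (a v : SVt) : gdist sa a v = F a v.
Proof. by case: (gdist_char (F_aa a) (@Flip a) (@F_pred a) v). Qed.

Lemma connS (a v : SVt) : connect sa a v.
Proof. by case: (gdist_char (F_aa a) (@Flip a) (@F_pred a) v). Qed.

Lemma DS_sym (a v : SVt) : gdist sa a v = gdist sa v a.
Proof. exact: gdist_sym connS sadj_sym a v. Qed.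

Lemma D_sym x y : D x y = D y x.
Proof. exact: gdist_sym conn esym x y. Qed.

Lemma DS_ll x u : gdist sa (inl x) (inl u) = 2 * D x u.
Proof. by rewrite DS_F. Qed.

Lemma DS_lr x (t : ES) u v : val t = [set u; v] ->
  gdist sa (inl x) (inr t) = 1 + 2 * minn (D x u) (D x v).
Proof. by move=> h; rewrite DS_F /=; case: (endsE h) => -> /=; lia. Qed.

Lemma DS_rl (s : ES) x y u : val s = [set x; y] ->
  gdist sa (inr s) (inl u) = 1 + 2 * minn (D x u) (D y u).
Proof. by move=> h; rewrite DS_F /=; case: (endsE h) => -> /=; lia. Qed.

Lemma DS_rr (s t : ES) x y u v : s != t -> val s = [set x; y] -> val t = [set u; v] ->
  gdist sa (inr s) (inr t) =
  2 + 2 * minn (minn (D x u) (D x v)) (minn (D y u) (D y v)).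
Proof.
move=> hst hs ht; rewrite DS_F /= (negbTE hst).
by case: (endsE hs) => -> /=; case: (endsE ht) => -> /=; lia.
Qed.

Lemma thS (s t : ES) x y u v : s != t -> val s = [set x; y] -> val t = [set u; v] ->
  Theta sa (inl x, inr s) (inl u, inr t) =
  (2 * D x u + (2 + 2 * minn (minn (D x u) (D x v)) (minn (D y u) (D y v)))
   != (1 + 2 * minn (D x u) (D x v)) + (1 + 2 * minn (D x u) (D y u))).
Proof.
move=> hst hs ht; rewrite /Theta /= hs ht !set21 /=.
by rewrite DS_ll (DS_rr hst hs ht) (DS_lr _ ht) (DS_rl _ hs).
Qed.

Lemma L1 x w y : e x w -> D x y <= D w y + 1. Proof. exact: lip1. Qed.

Lemma A_a (s t : ES) x y u v : s != t -> val s = [set x; y] -> val t = [set u; v] ->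
  e x y -> e u v ->
  Theta sa (inl x, inr s) (inl u, inr t) -> Theta e (x, y) (u, v).
Proof.
move=> hst hs ht hxy huv; rewrite (thS hst hs ht) /Theta /= hxy huv /=.
have hyx : e y x by rewrite esym.
have hvu : e v u by rewrite esym.
have := L2 x huv; have := L2 x hvu; have := L2 y huv; have := L2 y hvu.
have := L1 u hxy; have := L1 u hyx; have := L1 v hxy; have := L1 v hyx.
move=> ? ? ? ? ? ? ? ?; apply: contraNN => /eqP H; apply/eqP; lia.
Qed.

Lemma A_b (s t : ES) x y u v : s != t -> val s = [set x; y] -> val t = [set u; v] ->
  e x y -> e u v -> Theta e (x, y) (u, v) ->
  [|| Theta sa (inl x, inr s) (inl u, inr t), Theta sa (inl x, inr s) (inl v, inr t),
      Theta sa (inl y, inr s) (inl u, inr t) | Theta sa (inl y, inr s) (inl v, inr t)].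
Proof.
move=> hst hs ht hxy huv.
have hs' : val s = [set y; x] by rewrite hs setUC.
have ht' : val t = [set v; u] by rewrite ht setUC.
rewrite (thS hst hs ht) (thS hst hs ht') (thS hst hs' ht) (thS hst hs' ht').
rewrite /Theta /= hxy huv /=.
apply: contraLR; rewrite !negb_or !negbK => /and4P[/eqP h1 /eqP h2 /eqP h3 /eqP h4].
apply/eqP; lia.
Qed.

Lemma Th_swap1 (V : finType) (r : rel V) (rs : symmetric r) (a b : V) c :
  Theta r (a, b) c = Theta r (b, a) c.
Proof. by rewrite /Theta /= rs [gdist r b _ + _]addnC [gdist r b c.2 + _]addnC eq_sym. Qed.

Lemma Th_swap2 (V : finType) (r : rel V) (rs : symmetric r) (a b : V) c :
  Theta r c (a, b) = Theta r c (b, a).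
Proof. by rewrite /Theta /= (rs a b); congr (_ && (_ && _)); rewrite eq_sym. Qed.

Lemma Th_sym (V : finType) (r : rel V)
  (ds : forall a b, gdist r a b = gdist r b a) : symmetric (Theta r).
Proof.
move=> [a1 a2] [b1 b2]; rewrite /Theta /= andbCA; congr (_ && (_ && _)).
by rewrite !(ds a1) !(ds a2) [gdist r b1 a2 + _]addnC.
Qed.

Lemma csG : connect_sym (Theta e).
Proof. apply: sym_connect_sym; apply: Th_sym; exact: D_sym. Qed.

Lemma csS : connect_sym (Theta sa).
Proof. apply: sym_connect_sym; apply: Th_sym; exact: DS_sym. Qed.

Lemma flipG x y : e x y -> Theta e (x, y) (y, x).
Proof.
move=> h; rewrite /Theta /= h esym h /= !Dxx.
have : D x y != 0 by apply/eqP => /D0 E; rewrite E eirr in h.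
lia.
Qed.

Lemma flipS (a b : SVt) : sa a b -> Theta sa (a, b) (b, a).
Proof.
move=> h; rewrite /Theta /= h sadj_sym h /= !gdist_xx; try exact: connS.
have : gdist sa a b != 0.
  apply/eqP => /(gdist0 connS) E; rewrite {}E in h.
  by move: h; case: b.
lia.
Qed.

Lemma normS (a b : SVt) : sa a b -> exists z (s : ES), z \in val s /\
  sub_edge (a, b) = Some s /\ ((a, b) = (inl z, inr s) \/ (a, b) = (inr s, inl z)).
Proof.
case: a => [z|s]; case: b => [z'|s'] //= h.
  by exists z, s'; split; [exact: h | split; [by [] | left]].
by exists z', s; split; [exact: h | split; [by [] | right]].
Qed.

Lemma normTh (a b : SVt) : sa a b -> exists z (s : ES), z \in val s /\
  sub_edge (a, b) = Some s /\
  (forall c, Theta sa (a, b) c = Theta sa (inl z, inr s) c) /\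
  (forall c, Theta sa c (a, b) = Theta sa c (inl z, inr s)).
Proof.
move=> /normS [z [s [hz [hse E]]]]; exists z, s.
split; first exact: hz.
split; first exact: hse.
case: E => [[-> ->]|[-> ->]].
  by split => c.
split => c.
  by apply: Th_swap1; exact: sadj_sym.
by apply: Th_swap2; exact: sadj_sym.
Qed.

Lemma rep (z : T) (s : ES) : z \in val s -> exists y, val s = [set z; y] /\ e z y /\
  connect (Theta e) (ends s) (z, y).
Proof.
case: (endsP s); case: (ends s) => p q /= hpq hv.
rewrite hv !inE => /orP[] /eqP ->.
  by exists q; split; [by [] | split; [exact: hpq | exact: connect0]].
exists p; rewrite setUC; split; [by [] | split; [by rewrite esym |]].
by apply: connect1; apply: flipG.
Qed.

Lemma stepA f f' : Theta sa f f' -> exists s s', sub_edge f = Some s /\ sub_edge f' = Some s' /\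
  connect (Theta e) (ends s) (ends s').
Proof.
case: f => a b; case: f' => a' b' hth.
have /and3P[h1 h2 _] := hth.
have [z [s [hz [hse [H1 _]]]]] := normTh h1.
have [z' [s' [hz' [hse' [_ H2]]]]] := normTh h2.
exists s, s'; split; [exact: hse | split; [exact: hse' |]].
rewrite H1 H2 in hth.
have [y [hs [hzy c1]]] := rep hz.
have [y' [hs' [hzy' c2]]] := rep hz'.
case: (eqVneq s s') => [<-|hne]; first exact: connect0.
apply: connect_trans c1 _; rewrite csG; apply: connect_trans c2 _; rewrite csG.
by apply: connect1; apply: (A_a hne hs hs').
Qed.

Lemma chainA p f : path (Theta sa) f p -> forall s, sub_edge f = Some s ->
  forall s', sub_edge (last f p) = Some s' -> connect (Theta e) (ends s) (ends s').
Proof.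
elim: p f => [|f1 p IH] f /=.
  by move=> _ s -> s' [->]; exact: connect0.
move=> /andP[hth hp] s hs s' hs'.
have [s0 [s1 [h0 [h1 c]]]] := stepA hth.
rewrite hs in h0; case: h0 => E0; rewrite -E0 in c.
exact: connect_trans c (IH _ hp _ h1 _ hs').
Qed.

Definition Hh (s : ES) : SVt * SVt := (inl (ends s).1, inr s).

Section Hyp.
Hypothesis Hy : forall (x y : T) (s : ES), e x y -> val s = [set x; y] ->
     ThetaStar sa (inl x, inr s) (inr s, inl y).

Lemma half_class (z : T) (s : ES) : z \in val s ->
  connect (Theta sa) (inl z, inr s) (Hh s) /\ connect (Theta sa) (inr s, inl z) (Hh s).
Proof.
rewrite /Hh; case: (endsP s); case: (ends s) => p q /= hpq hv0.
have hv : val s = [set p; q] by exact: hv0.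
have hp : p \in val s by rewrite hv set21.
have hq : q \in val s by rewrite hv set22.
have f1 : connect (Theta sa) (inr s, inl p) (inl p, inr s).
  by apply: connect1; apply: flipS; rewrite sadj_sym.
have f2 : connect (Theta sa) (inr s, inl q) (inl q, inr s).
  by apply: connect1; apply: flipS; rewrite sadj_sym.
have hqp : e q p by rewrite esym.
have hv' : val s = [set q; p] by rewrite hv setUC.
have c1 : connect (Theta sa) (inl q, inr s) (inl p, inr s).
  exact: connect_trans (Hy hqp hv') f1.
move=> hz; have : z \in [set p; q] by rewrite -hv.
rewrite !inE => /orP[] /eqP ->.
  by split => //; exact: connect0.
by split => //; apply: connect_trans f2 c1.
Qed.

Lemma stepB c c' (s s' : ES) : Theta e c c' -> val s = [set c.1; c.2] ->
  val s' = [set c'.1; c'.2] -> connect (Theta sa) (Hh s) (Hh s').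
Proof.
case: c => x y; case: c' => u v hth hs0 hs0'.
have hs : val s = [set x; y] by exact: hs0.
have hs' : val s' = [set u; v] by exact: hs0'.
case: (eqVneq s s') => [<-|hne]; first exact: connect0.
have /and3P[hxy huv _] := hth.
have hx : x \in val s by rewrite hs set21.
have hy : y \in val s by rewrite hs set22.
have hu : u \in val s' by rewrite hs' set21.
have hv : v \in val s' by rewrite hs' set22.
have K : forall w w', w \in val s -> w' \in val s' ->
    Theta sa (inl w, inr s) (inl w', inr s') -> connect (Theta sa) (Hh s) (Hh s').
  move=> w w' hw hw' th.
  have [c1 _] := half_class hw; have [c2 _] := half_class hw'.
  rewrite csS in c1.
  apply: connect_trans c1 _; apply: connect_trans (connect1 th) c2.
case/or4P: (A_b hne hs hs' hxy huv hth) => th.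
- exact: K hx hu th.
- exact: K hx hv th.
- exact: K hy hu th.
- exact: K hy hv th.
Qed.

Lemma chainB p c (s : ES) : path (Theta e) c p -> val s = [set c.1; c.2] ->
  forall s' : ES, val s' = [set (last c p).1; (last c p).2] ->
  connect (Theta sa) (Hh s) (Hh s').
Proof.
elim: p c s => [|c1 p IH] c s /=.
  move=> _ hs s' hs'; have E : sval s = sval s' by rewrite hs hs'.
  have -> : s = s' by apply: val_inj; exact: E.
  exact: connect0.
move=> /andP[hth hp] hs s' hs'.
have h1 : e c1.1 c1.2 by case/and3P: hth.
have hv1 : val (mkE h1) = [set c1.1; c1.2] by [].
exact: connect_trans (stepB hth hs hv1) (IH _ _ hp hv1 _ hs').
Qed.

Lemma to_H (a b : SVt) (s : ES) : sa a b -> sub_edge (a, b) = Some s ->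
  connect (Theta sa) (a, b) (Hh s).
Proof.
move=> h hse; have [z [s0 [hz [hse0 E]]]] := normS h.
rewrite hse in hse0; case: hse0 => E0; subst s0.
have [c1 c2] := half_class hz.
by case: E => ->.
Qed.

End Hyp.

Lemma mainS :
  (forall (x y : T) (s : ES), e x y -> val s = [set x; y] ->
     ThetaStar sa (inl x, inr s) (inr s, inl y))
  <->
  (forall f1 f2 : SVt * SVt, sa f1.1 f1.2 -> sa f2.1 f2.2 ->
     (ThetaStar sa f1 f2 <-> @SThetaStar T e f1 f2)).
Proof.
split.
- move=> Hy [a b] [a' b'] /= h1 h2.
  have [z [s [hz [hse _]]]] := normTh h1.
  have [z' [s' [hz' [hse' _]]]] := normTh h2.
  rewrite /SThetaStar hse hse'; split.
  + move=> /connectP [p hp E]; rewrite E in hse'.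
    have c := chainA hp hse hse'.
    exists (ends s).1, (ends s).2, (ends s').1, (ends s').2.
    split; first by case: (endsP s).
    split; first by case: (endsP s').
    by rewrite /ThetaStar -!surjective_pairing.
  + move=> [x [y [u [v [hs [hs' hc]]]]]].
    move/connectP: hc => [p hp E].
    have hl : val s' = [set (last (x, y) p).1; (last (x, y) p).2] by rewrite -E.
    have c := chainB Hy hp hs hl.
    apply: connect_trans (to_H Hy h1 hse) _.
    apply: connect_trans c _.
    by rewrite csS; apply: to_H.
- move=> H x y s hxy hs.
  have h1 : sa (inl x) (inr s) by rewrite /= hs set21.
  have h2 : sa (inr s) (inl y) by rewrite /= hs set22.
  apply/(H (inl x, inr s) (inr s, inl y) h1 h2).
  rewrite /SThetaStar /=; exists x, y, x, y.
  split; first exact: hs.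
  split; first exact: hs.
  exact: connect0.
Qed.

End S.

Theorem lemma3p5 (T : finType) (e : rel T) :
  simple_graph e -> connected_graph e ->
  (forall (x y : T) (s : @Eset T e), e x y -> val s = [set x; y] ->
     ThetaStar (@sadj T e) (inl x, inr s) (inr s, inl y))
  <->
  (forall f1 f2 : @SV T e * @SV T e,
     sadj f1.1 f1.2 -> sadj f2.1 f2.2 ->
     (ThetaStar (@sadj T e) f1 f2 <-> @SThetaStar T e f1 f2)).
Proof.
move=> [esym eirr] conn.
exact: (mainS esym eirr conn).
Qed.
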